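(* For a ring $R$, the following are equivalent: (1) $R$ is a DT ring; (2) $R$ is a semi-tripotent ring; (3) for each $a\in R$ there exist $e\in R$ with $e^2=e$, $v\in R$ with $v^2=1$ and $ev=ve$, and $j\in J(R)$, such that $a=e+v+j$.
   Context: All rings are associative with identity. $J(R)$ is the Jacobson radical, $U(R)$ the group of units. $\Delta(R)=\{x\in R: x+u\in U(R)\text{ for all }u\in U(R)\}$. $\mathrm{Tr}(R)=\{x\in R: x^3=x\}$. A ring $R$ is a DT ring if every $r\in R$ can be written $r=e+d$ with $e\in\mathrm{Tr}(R)$ and $d\in\Delta(R)$. A ring $R$ is semi-tripotent if every $r\in R$ can be written $r=e+j$ with $e\in\mathrm{Tr}(R)$ and $j\in J(R)$. *)

(* Defs.v *)
From mathcomp Require Import all_boot all_order all_algebra.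
Set Implicit Arguments. Unset Strict Implicit. Unset Printing Implicit Defensive.
Import GRing.Theory.
Local Open Scope ring_scope.

(* Jacobson radical J(R), via the standard elementwise description:
   x \in J(R) iff 1 - r x is a unit for every r in R. *)
Definition jacobson (R : unitRingType) (x : R) : Prop :=
  forall r : R, (1 - r * x) \is a GRing.unit.

Definition Delta (R : unitRingType) (x : R) : Prop :=
  forall u : R, u \is a GRing.unit -> (x + u) \is a GRing.unit.

Definition tripotent (R : unitRingType) (e : R) : Prop := e ^+ 3 = e.

Definition DT_ring (R : unitRingType) : Prop :=
  forall r : R, exists e d : R, tripotent e /\ Delta d /\ r = e + d.

Definition semi_tripotent (R : unitRingType) : Prop :=
  forall r : R, exists e j : R, tripotent e /\ jacobson j /\ r = e + j.

(* Main.v *)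
Require Import Defs.
From mathcomp Require Import all_boot all_order all_algebra.
From mathcomp Require Import ring.
Import GRing.Theory.
Local Open Scope ring_scope.

Section Transfer.
Variable R : unitRingType.

Lemma cf1 (x : R) : commr_rmorph (intr : int -> R) x.
Proof. move=> n; exact: commr_int. Qed.

Lemma cf2 {x y : R} : GRing.comm x y -> commr_rmorph (horner_morph (cf1 x)) y.
Proof.
move=> cxy p; elim/poly_ind: p => [|p c IH]; first by rewrite rmorph0; exact: commr0.
rewrite rmorphD rmorphM /= !horner_morphX horner_morphC.
apply: commrD; first (apply: commrM => //; exact: commr_sym).
exact: commr_int.
Qed.

Definition phi {x y : R} (cxy : GRing.comm x y) : {rmorphism {poly {poly int}} -> R} :=
  horner_morph (cf2 cxy).

Lemma phiG x y (cxy : GRing.comm x y) : phi cxy ('X)%:P = x.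
Proof. by rewrite /phi /= horner_morphC; exact: horner_morphX. Qed.

Lemma phiV x y (cxy : GRing.comm x y) : phi cxy 'X = y.
Proof. by rewrite /phi /=; exact: horner_morphX. Qed.

End Transfer.
Arguments phi {R x y}.
Arguments phiG {R x y}.
Arguments phiV {R x y}.

Notation PG := (('X : {poly int})%:P : {poly {poly int}}).
Notation PV := ('X : {poly {poly int}}).

Ltac push c := rewrite ?(rmorphD, rmorphB, rmorphN, rmorphM, rmorphXn, rmorph1, rmorph0, rmorphMn, rmorph_nat, phiG c, phiV c).


Lemma idF (S : comRingType) (g v : S) :
  (g + v) * (g + v) * ((g + v) * (g + v)) - (g + v) * (g + v) =
  6%:R * (g + g * v) + (g * g - g) * (4 * v + 6 * v * v + g + 4 * g * v + g * g)
  + (v * v - 1) * (v * v + 6 * g + 4 * g * v).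
Proof. ring. Qed.

Lemma idA2 (S : comRingType) (g v : S) :
  4%:R * ((g + v) * (g + v) * (g + v) - (g + v)) =
  6%:R * (2 * g + 2 * g * v) + (g * g - g) * (4 + 12 * v + 4 * g)
  + (v * v - 1) * (4 * v + 12 * g).
Proof. ring. Qed.

Lemma idL (S : comRingType) (g v : S) :
  (1 - g) - (g + v) = (1 - 2 * g) * ((g + v) * (g + v) - (g + v))
  + (g * g - g) * (- 1 + 4 * v + 2 * g) + (v * v - 1) * (- 1 + 2 * g).
Proof. ring. Qed.

Lemma id24 (S : comRingType) (g : S) :
  24%:R = (5 * g + 3) * ((3%:R - g) * (3%:R - g) - 1) + (22 - 5 * g) * (g * g - g).
Proof. ring. Qed.

Lemma idPow (S : comRingType) (x : S) :
  (x * x * x * (x * x)) * (x * x * x * (x * x)) - x * x =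
  (x * x * (x * x) - x * x) * (x ^+ 6 + x ^+ 4 + x ^+ 2 + 1).
Proof. ring. Qed.

Lemma idZ (S : comRingType) (x : S) :
  [/\ (3%:R * (x * x * x - x)) * (3%:R * (x * x * x - x)) = (x * x * (x * x) - x * x) * (9 * x * x - 9),
      3%:R * (x * x * x - x) + 3%:R * (x * x * x - x) = 6%:R * (x * x * x - x) &
      x * x * x - x = 4%:R * (x * x * x - x) - 3%:R * (x * x * x - x)].
Proof. split; ring. Qed.

Lemma idP (S : comRingType) (a : S) :
  [/\ (- a - 4 * a * a) * (- a - 4 * a * a) - (- a - 4 * a * a) =
        (a * a * a - a) * (16 * a + 8) + 6%:R * (3 * a * a + 2 * a) + 3%:R * (a * a - a),
      (4 * a - 4 * a * a) * (4 * a - 4 * a * a) - (4 * a - 4 * a * a) =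
        (a * a * a - a) * (16 * a - 32) + 6%:R * (6 * a * a - 6 * a),
      (- a - 4 * a * a) * (4 * a - 4 * a * a) = (a * a * a - a) * (16 * a - 12) + 6%:R * (2 * a * a - 2 * a),
      (4 * a - 4 * a * a) * (- a - 4 * a * a) = (a * a * a - a) * (16 * a - 12) + 6%:R * (2 * a * a - 2 * a) &
      [/\ (- a - 4 * a * a) - (4 * a - 4 * a * a) = a - 6%:R * a,
          (3%:R * (a * a - a)) * (3%:R * (a * a - a)) = (a * a * a - a) * (9 * a - 18) + 6%:R * (3 * a * a - 3 * a) &
          True]].
Proof. split; [ring|ring|ring|ring|split; [ring|ring|done]]. Qed.

Lemma idT (S : comRingType) (x y : S) :
  (x - y) ^+ 3 = (x - y) + (x * x - x) * (x + 1) - (y * y - y) * (y + 1) - 3%:R * (x * y) * (x - y).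
Proof. ring. Qed.

Section Part1.
Variable R : unitRingType.
Implicit Types x y u w d h j e g v a b c r s t z : R.

Lemma unit_swap {x y} : (1 - x * y) \is a GRing.unit -> (1 - y * x) \is a GRing.unit.
Proof.
move=> Hu; set s := (1 - x * y)^-1.
have h1 : (1 - x * y) * s = 1 by rewrite mulrV.
have h2 : s * (1 - x * y) = 1 by rewrite mulVr.
have c1 : x * (1 - y * x) = (1 - x * y) * x by rewrite mulrBr mulrBl mulr1 mul1r mulrA.
have c2 : (1 - y * x) * y = y * (1 - x * y) by rewrite mulrBr mulrBl mulr1 mul1r mulrA.
apply/unitrP; exists (1 + y * s * x); split.
- rewrite mulrDl mul1r.
  have -> : y * s * x * (1 - y * x) = y * x.
    by rewrite -!mulrA c1 [s * _]mulrA h2 mul1r.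
  by rewrite subrK.
- rewrite mulrDr mulr1.
  have -> : (1 - y * x) * (y * s * x) = y * x.
    by rewrite !mulrA c2 -[y * _ * s]mulrA h1 mulr1.
  by rewrite subrK.
Qed.

Lemma unitM x y : x \is a GRing.unit -> y \is a GRing.unit -> x * y \is a GRing.unit.
Proof. by move=> hx hy; rewrite unitrMl. Qed.

Lemma jac_Delta j : jacobson j -> Delta j.
Proof.
move=> hj u hu.
have -> : j + u = u * (1 - (- u^-1) * j).
  by rewrite mulNr opprK mulrDr mulr1 mulVKr // addrC.
by apply: unitM.
Qed.

Lemma Delta_mulr x u : Delta x -> u \is a GRing.unit -> Delta (x * u).
Proof.
move=> hx hu w hw.
have -> : x * u + w = (x + w * u^-1) * u by rewrite mulrDl mulrVK.
apply: unitM => //; apply: hx; apply: unitM => //; by rewrite unitrV.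
Qed.

Lemma Delta_mull x u : Delta x -> u \is a GRing.unit -> Delta (u * x).
Proof.
move=> hx hu w hw.
have -> : u * x + w = u * (x + u^-1 * w) by rewrite mulrDr mulVKr.
apply: unitM => //; apply: hx; apply: unitM => //; by rewrite unitrV.
Qed.

Lemma Delta_add x y : Delta x -> Delta y -> Delta (x + y).
Proof. by move=> hx hy u hu; rewrite -addrA; apply: hx; apply: hy. Qed.

Lemma Delta_opp x : Delta x -> Delta (- x).
Proof.
move=> hx u hu; have -> : - x + u = - (x + - u) by rewrite opprD opprK.
by rewrite unitrN; apply: hx; rewrite unitrN.
Qed.

Lemma Delta_1 x : Delta x -> (1 - x) \is a GRing.unit.
Proof. by move=> hx; rewrite addrC; exact: (Delta_opp _ hx _ (unitr1 _)). Qed.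

Lemma Delta_mul x y : Delta x -> Delta y -> Delta (x * y).
Proof.
move=> hx hy u hu.
have hw : (x + 1) \is a GRing.unit by apply: hx; exact: unitr1.
have hp : (u - y) \is a GRing.unit by rewrite addrC; exact: (Delta_opp _ hy _ hu).
have -> : x * y + u = (u - y) * ((u - y)^-1 * (x + 1) * y + 1).
  rewrite mulrDr mulr1 !mulrA mulrV // mul1r mulrDl mul1r.
  by rewrite (addrC u) addrA addrK.
rewrite unitrMr //.
have hv : (u - y)^-1 * (x + 1) \is a GRing.unit by rewrite unitrMr // unitrV.
exact: (Delta_mull _ _ hy hv _ (unitr1 _)).
Qed.


Lemma lr_unit a l r : l * a = 1 -> a * r = 1 -> a \is a GRing.unit.
Proof.
move=> hl hr; apply/unitrP; exists l; split=> //.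
have -> : l = r by rewrite -[l]mulr1 -hr mulrA hl mul1r.
done.
Qed.

Lemma J0 : jacobson (0 : R).
Proof. by move=> r; rewrite mulr0 subr0 unitr1. Qed.

Lemma JMl {r x} : jacobson x -> jacobson (r * x).
Proof. by move=> hx s; rewrite mulrA. Qed.

Lemma JMr {x r} : jacobson x -> jacobson (x * r).
Proof. by move=> hx s; rewrite mulrA; apply: unit_swap; rewrite mulrA. Qed.

Lemma JN {x} : jacobson x -> jacobson (- x).
Proof. by move=> hx s; rewrite mulrN -mulNr. Qed.

Lemma JD {x y} : jacobson x -> jacobson y -> jacobson (x + y).
Proof.
move=> hx hy s.
have hu := hx s.
have -> : 1 - s * (x + y) = (1 - s * x) * (1 - ((1 - s * x)^-1 * s) * y).
  by rewrite mulrBr mulr1 !mulrA mulrV // mul1r mulrDr opprD addrA.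
by rewrite unitrMr.
Qed.

Lemma JB {x y} : jacobson x -> jacobson y -> jacobson (x - y).
Proof. by move=> hx hy; apply: JD => //; apply: JN. Qed.

Lemma J_unit {x} : jacobson x -> (1 - x) \is a GRing.unit.
Proof. by move=> hx; have := hx 1; rewrite mul1r. Qed.

Lemma J_unitD {x} : jacobson x -> (1 + x) \is a GRing.unit.
Proof. by move=> hx; have := J_unit (JN hx); rewrite opprK. Qed.

Lemma J_sq {x} : jacobson (x * x) -> (1 - x) \is a GRing.unit.
Proof.
move=> hx; have hu := J_unit hx.
apply: (@lr_unit _ ((1 - x * x)^-1 * (1 + x)) ((1 + x) * (1 - x * x)^-1)).
- rewrite -mulrA mulrDl mul1r mulrBr mulr1 addrA subrK.
  by rewrite mulVr.
- rewrite mulrA mulrBl mul1r mulrDr mulr1 opprD addrA addrK.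
  by rewrite mulrV.
Qed.

Lemma J_idem h : h * h = h -> jacobson h -> h = 0.
Proof.
move=> hh hj; have hu := J_unit hj.
have : h * (1 - h) = 0 by rewrite mulrBr mulr1 hh subrr.
by move/(congr1 (fun z => z * (1 - h)^-1)); rewrite mul0r mulrK.
Qed.

Lemma cube_id (S : comRingType) (w : S) :
  (1 + w + w * w) * (1 - w) = 1 - w * w * w /\ (1 - w) * (1 + w + w * w) = 1 - w * w * w.
Proof. split; ring. Qed.

Lemma J_nat_cube n : jacobson ((n ^ 3)%:R : R) -> jacobson (n%:R : R).
Proof.
move=> hn r.
set w := r * n%:R.
have hw : jacobson (w * w * w).
  have -> : w * w * w = r ^+ 3 * (n ^ 3)%:R.
    rewrite natrX -exprMn_comm; last exact: commr_nat.
    by rewrite -/w !exprSr expr0 mul1r.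
  exact: JMl.
clearbody w.
have hu := J_unit hw.
have c := commr_refl w.
have [e1 e2] := @cube_id _ PV.
move: (congr1 (phi c) e1) (congr1 (phi c) e2); push c => e1' e2'.
apply: (@lr_unit _ ((1 - w * w * w)^-1 * (1 + w + w * w)) ((1 + w + w * w) * (1 - w * w * w)^-1)).
- by rewrite -mulrA e1' mulVr.
- by rewrite mulrA e2' mulrV.
Qed.


Lemma sq0_unit z : z * z = 0 -> (1 + z) \is a GRing.unit.
Proof.
move=> hz; apply: (@lr_unit _ (1 - z) (1 - z)).
- by rewrite mulrBl mul1r mulrDr mulr1 hz addr0 addrK.
- by rewrite mulrDl mul1r mulrBr mulr1 hz subr0 subrK.
Qed.

Lemma idem_unit h d : h * h = h -> Delta d -> (1 - h * d) \is a GRing.unit.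
Proof.
move=> hh hd.
pose f := 1 - h.
have e1 : h + f = 1 by rewrite /f addrC subrK.
have hf : h * f = 0 by rewrite /f mulrBr mulr1 hh subrr.
have fh : f * h = 0 by rewrite /f mulrBl mul1r hh subrr.
pose a := h * d * h. pose b := h * d * f. pose c := f * d * h.
have cc : c * c = 0 by rewrite /c -!mulrA (mulrA h f) hf mul0r !mulr0.
have bb : b * b = 0 by rewrite /b -!mulrA (mulrA f h) fh mul0r !mulr0.
have hc : h * c = 0 by rewrite /c !mulrA hf !mul0r.
have hb : h * b = b by rewrite /b !mulrA hh.
have bh : b * h = 0 by rewrite /b -mulrA fh mulr0.
have ch : c * h = c by rewrite /c -mulrA hh.
have hdab : h * d = a + b by rewrite /a /b -mulrDr e1 mulr1.
have dhac : d * h = a + c by rewrite /a /c -!mulrDl e1 mul1r.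
pose W := (1 + c) * (1 + b).
have hW : W \is a GRing.unit by rewrite /W unitrMr; [exact: sq0_unit | exact: sq0_unit].
pose X := W - d.
have hX : X \is a GRing.unit by rewrite /X addrC; exact: (Delta_opp _ hd _ hW).
have hXl : h * X = h - a.
  rewrite /X mulrBr /W mulrA (mulrDr h 1 c) mulr1 hc addr0 mulrDr mulr1 hb hdab.
  by rewrite (addrC a b) addrKA.
have hXr : X * h = h - a.
  rewrite /X mulrBl /W -mulrA (mulrDl 1 b h) mul1r bh addr0 mulrDl mul1r ch dhac.
  by rewrite (addrC a c) addrKA.
pose Y := X^-1.
have ha : h * a = a by rewrite /a !mulrA hh.
have ah : a * h = a by rewrite /a -mulrA hh.
have fa : f * a = 0 by rewrite /a !mulrA fh !mul0r.
have af : a * f = 0 by rewrite /a -mulrA hf mulr0.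
have ua : (1 - a) \is a GRing.unit.
  apply: (@lr_unit _ (f + h * Y * h) (f + h * Y * h)).
  - rewrite mulrDl mulrBr mulr1 fa subr0 -mulrA mulrBr mulr1 ha -hXr.
    by rewrite mulrA -(mulrA h Y X) mulVr // mulr1 hh addrC e1.
  - rewrite mulrDr mulrBl mul1r af subr0 !mulrA mulrBl mul1r ah -hXl.
    by rewrite -(mulrA h X Y) mulrV // mulr1 hh addrC e1.
have u1 : (1 - h * (d * h)) \is a GRing.unit by rewrite mulrA.
have u2 := unit_swap u1.
rewrite -mulrA hh in u2.
exact: unit_swap u2.
Qed.

Lemma Delta_idem h d : h * h = h -> Delta d -> Delta (h * d).
Proof.
move=> hh hd u hu.
have hui : u^-1 \is a GRing.unit by rewrite unitrV.
have -> : h * d + u = u * (1 - (u^-1 * h * u) * (- (u^-1 * d))).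
  rewrite mulrN opprK -!mulrA (mulVKr hu) mulrDr mulr1 (mulVKr hu).
  by rewrite addrC.
rewrite unitrMr //; apply: idem_unit.
- by rewrite -!mulrA (mulVKr hu) !mulrA -(mulrA _ h h) hh.
- by apply: Delta_opp; apply: Delta_mull.
Qed.

Lemma trip_id (S : comRingType) (e : S) :
  [/\ (e + 1 - e * e) * (e + 1 - e * e) = 1 + (e ^+ 3 - e) * (e - 2),
      (e + 1 - e * e) * (e * e) = e + (e ^+ 3 - e) * (1 - e),
      (e * e) * (e * e) = e * e + (e ^+ 3 - e) * e,
      (1 - e * e) * (1 - e * e) = (1 - e * e) + (e ^+ 3 - e) * e &
   [/\ (e + e * e - 1) * (e + e * e - 1) = 1 + (e ^+ 3 - e) * (e + 2),
      (1 - e * e) * (e + e * e - 1) = (e + e * e - 1) * (1 - e * e) &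
      e = (1 - e * e) + (e + e * e - 1)]].
Proof. split; [ring|ring|ring|ring|split; ring]. Qed.

Lemma trip_facts {e} : e ^+ 3 = e ->
  [/\ (e + 1 - e * e) * (e + 1 - e * e) = 1,
      (e + 1 - e * e) * (e * e) = e,
      (e * e) * (e * e) = e * e,
      (1 - e * e) * (1 - e * e) = (1 - e * e) &
   [/\ (e + e * e - 1) * (e + e * e - 1) = 1,
      (1 - e * e) * (e + e * e - 1) = (e + e * e - 1) * (1 - e * e) &
      e = (1 - e * e) + (e + e * e - 1)]].
Proof.
move=> he.
have c := commr_refl e.
have [i1 i2 i3 i4 [i5 i6 i7]] := @trip_id _ PV.
move: (congr1 (phi c) i1) (congr1 (phi c) i2) (congr1 (phi c) i3) (congr1 (phi c) i4)
      (congr1 (phi c) i5) (congr1 (phi c) i6) (congr1 (phi c) i7).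
have he' : e * (e * e) = e by rewrite -{4}he !exprS expr0 mulr1.
push c; rewrite he' subrr !mul0r !addr0 => j1 j2 j3 j4 j5 j6 j7.
by split.
Qed.

Lemma DT_J : DT_ring R -> forall d, Delta d -> jacobson d.
Proof.
move=> hDT d hd s.
case: (hDT s) => e [d' [he [hd' ->]]].
have [t1 t2 t3 _ _] := trip_facts he.
have hv : (e + 1 - e * e) \is a GRing.unit by apply/unitrP; exists (e + 1 - e * e).
have ed : Delta (e * d).
  rewrite -t2 -mulrA; apply: Delta_mull => //; exact: Delta_idem.
apply: Delta_1; rewrite mulrDl; apply: Delta_add => //; exact: Delta_mul.
Qed.

Lemma part12 : DT_ring R <-> semi_tripotent R.
Proof.
split.
- move=> hDT r; case: (hDT r) => e [d [he [hd ->]]].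
  by exists e, d; do !split => //; exact: (DT_J hDT _ hd).
- move=> hST r; case: (hST r) => e [j [he [hj ->]]].
  by exists e, j; do !split => //; exact: (jac_Delta _ hj).
Qed.

Lemma part23 : semi_tripotent R ->
  forall a : R, exists e v j : R,
    e * e = e /\ v * v = 1 /\ e * v = v * e /\ jacobson j /\ a = e + v + j.
Proof.
move=> hST a; case: (hST a) => e [j [he [hj ->]]].
have [_ _ _ t4 [t5 t6 t7]] := trip_facts he.
exists (1 - e * e), (e + e * e - 1), j; split=> //; split=> //; split=> //; split=> //.
by rewrite {1}t7.
Qed.


Definition jeq x y := jacobson (x - y).

Lemma jeq_refl x : jeq x x.
Proof. by rewrite /jeq subrr; exact: J0. Qed.

Lemma jeq_sym {x y} : jeq x y -> jeq y x.
Proof. by rewrite /jeq => h; rewrite -opprB; apply: JN. Qed.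

Lemma jeq_trans {x y z} : jeq x y -> jeq y z -> jeq x z.
Proof.
rewrite /jeq => h1 h2.
have -> : x - z = (x - y) + (y - z) by rewrite addrA subrK.
exact: JD.
Qed.

Lemma jeqB {x x' y y'} : jeq x x' -> jeq y y' -> jeq (x - y) (x' - y').
Proof.
rewrite /jeq => h1 h2.
have -> : x - y - (x' - y') = (x - x') - (y - y').
  by rewrite opprB opprB addrACA [in RHS]addrACA; congr (_ + _); exact: addrC.
exact: JB.
Qed.

Lemma jeqMl c {x y} : jeq x y -> jeq (c * x) (c * y).
Proof. by rewrite /jeq -mulrBr; apply: JMl. Qed.

Lemma jeqMr c {x y} : jeq x y -> jeq (x * c) (y * c).
Proof. by rewrite /jeq -mulrBl; apply: JMr. Qed.

Lemma jeqM {x x' y y'} : jeq x x' -> jeq y y' -> jeq (x * y) (x' * y').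
Proof. by move=> h1 h2; apply: (jeq_trans (jeqMr y h1)); apply: jeqMl. Qed.

Lemma jeq0 x : jeq x 0 -> jacobson x.
Proof. by rewrite /jeq subr0. Qed.

Lemma jeq_J {x y} : jeq x y -> jacobson y -> jacobson x.
Proof. by rewrite /jeq => h hy; have := JD h hy; rewrite subrK. Qed.

Variable H3 : forall a : R, exists e v j : R,
  e * e = e /\ v * v = 1 /\ e * v = v * e /\ jacobson j /\ a = e + v + j.

Lemma dec x : exists g v, [/\ g * g = g, v * v = 1, GRing.comm g v & jeq x (g + v)].
Proof.
case: (H3 x) => g [v [j [hg [hv [hc [hj ->]]]]]].
exists g, v; split=> //.
by rewrite /jeq addrC addKr.
Qed.

Lemma J6 : jacobson (6%:R : R).
Proof.
case: (dec 3%:R) => g [v [hg hv hc h3]].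
have h1 : jeq (3%:R - g) v.
  rewrite /jeq.
  have -> : 3%:R - g - v = 3%:R - (g + v) by rewrite opprD addrA.
  exact: h3.
have h2 := jeqM h1 h1.
rewrite /jeq hv in h2.
have c := commr_refl g.
move: (congr1 (phi c) (@id24 _ PV)); push c; rewrite hg subrr mulr0 addr0 => e.
have j24 : jacobson (24%:R : R).
  have : jacobson ((5 * g + 3) * ((3%:R - g) * (3%:R - g) - 1)) by apply: JMl.
  by rewrite -e.
apply: J_nat_cube.
have -> : ((6 ^ 3)%:R : R) = 9%:R * 24%:R by rewrite -natrM.
exact: JMl.
Qed.

Lemma Fy y : jacobson (y * y * (y * y) - y * y).
Proof.
case: (dec y) => g [v [hg hv hc hy]].
set s := g + v.
have h2 := jeqM hy hy.
have h4 := jeqM h2 h2.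
have hs : jeq (s * s * (s * s)) (s * s).
  rewrite /jeq /s.
  move: (congr1 (phi hc) (@idF _ PG PV)); push hc; rewrite hg hv !subrr !mul0r !addr0 => e.
  rewrite e; apply: JMr; exact: J6.
exact: (jeq_trans h4 (jeq_trans hs (jeq_sym h2))).
Qed.

Lemma A2 x : jacobson (4%:R * (x * x * x - x)).
Proof.
case: (dec x) => g [v [hg hv hc hx]].
have h3 := jeqM (jeqM hx hx) hx.
have h := jeqMl 4%:R (jeqB h3 hx).
apply: jeq0; apply: (jeq_trans h).
move: (congr1 (phi hc) (@idA2 _ PG PV)); push hc; rewrite hg hv !subrr !mul0r !addr0 => e.
by rewrite /jeq subr0 e; apply: JMr; exact: J6.
Qed.

Lemma lift {b} : jacobson (b * b - b) -> exists e, e * e = e /\ jeq e b.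
Proof.
move=> hb.
case: (dec b) => g [v [hg hv hc h]].
have hss : jeq ((g + v) * (g + v)) (g + v).
  apply: (jeq_trans (jeqM (jeq_sym h) (jeq_sym h))).
  exact: (jeq_trans hb h).
exists (1 - g); split.
  by rewrite mulrBr mulr1 mulrBl mul1r hg subrr subr0.
apply: (jeq_trans _ (jeq_sym h)).
move: (congr1 (phi hc) (@idL _ PG PV)); push hc; rewrite hg hv !subrr !mul0r !addr0 => e.
by rewrite /jeq e; apply: JMl.
Qed.


Lemma Hn (n : R) : jacobson (n * n) -> jacobson (n + n) -> jacobson n.
Proof.
move=> hnn h2n r.
apply: unit_swap.
pose N := n * r.
apply: (@J_sq N).
have hF := Fy N.
have [e [he heN]] := lift hF.
have oe : (1 - e) * e = 0 by rewrite mulrBl mul1r he subrr.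
have eo : e * (1 - e) = 0 by rewrite mulrBr mulr1 he subrr.
have oo : (1 - e) * (1 - e) = 1 - e by rewrite mulrBr mulr1 oe subr0.
pose B := e * n * (1 - e). pose S := (1 - e) * r * e.
have Bdef : B = e * n * (1 - e) by []. have Sdef : S = (1 - e) * r * e by [].
clearbody B S.
pose X := e + B + S. pose p := B * S.
have pdef : p = B * S by []. clearbody p.
have eB : e * B = B by rewrite Bdef !mulrA he.
have Be : B * e = 0 by rewrite Bdef -mulrA oe mulr0.
have eS : e * S = 0 by rewrite Sdef !mulrA eo !mul0r.
have Se : S * e = S by rewrite Sdef -mulrA he.
have BB : B * B = 0 by rewrite -{2}eB mulrA Be mul0r.
have SS : S * S = 0 by rewrite -{1}Se -mulrA eS mulr0.
have ep : e * p = p by rewrite pdef mulrA eB.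
have Bp : B * p = 0 by rewrite pdef mulrA BB mul0r.
have pS : p * S = 0 by rewrite pdef -mulrA SS mulr0.
have eX : e * X = e + B by rewrite /X mulrDr mulrDr he eB eS addr0.
have Xe : X * e = e + S by rewrite /X mulrDl mulrDl he Be Se addr0.
have eXX : e * (X * X) = e + B + p.
  by rewrite mulrA eX mulrDl eX /X mulrDr mulrDr Be BB -pdef !add0r.
have XXe : (X * X) * e = e + S + p.
  by rewrite -mulrA Xe mulrDr Xe /X mulrDl mulrDl eS SS -pdef add0r addr0.
have hFX := Fy X.
set Q := X * X in eXX XXe hFX.
have es : e + S + p - e = S + p by rewrite addrAC (addrC e S) addrK.
have key : e * (Q * Q - Q) * e = p + p + p * p.
  rewrite mulrBr mulrBl (mulrA e Q Q) -(mulrA (e * Q) Q e) -mulrBr eXX XXe es.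
  rewrite mulrDl mulrDl !mulrDr eS ep Bp pS -pdef !add0r !addr0.
  done.
have hsum : jacobson (p + p + p * p) by rewrite -key; apply: JMr; apply: JMl.
have h2p : jacobson (p + p).
  have -> : p + p = e * (n + n) * (1 - e) * S by rewrite pdef Bdef (mulrDr e n n) mulrDl mulrDl.
  by apply: JMr; apply: JMr; apply: JMl.
have hpp : jacobson (p * p).
  by have := JB hsum h2p; rewrite (addrC (p + p)) addrK.
have hene : jacobson (e * n * e).
  apply: (jeq_J (jeqM (jeqM heN (jeq_refl n)) heN)).
  have -> : N * N * n * (N * N) = (n * r * n * r) * (n * n) * (r * n * r) by rewrite /N !mulrA.
  by apply: JMr; apply: JMl.
have hp : jeq p (e * N * e).
  have -> : p = e * N * e - e * n * e * r * e.
    rewrite pdef Bdef Sdef /N !mulrA -(mulrA (e * n) (1 - e) (1 - e)) oo.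
    by rewrite (mulrBr (e * n) 1 e) mulr1 !mulrBl.
  by rewrite /jeq addrAC subrr add0r; apply: JN; apply: JMr; apply: JMr.
pose M := N * N * N * (N * N).
have hM : jeq p M by apply: (jeq_trans hp); exact: (jeqM (jeqM heN (jeq_refl N)) heN).
have hMM := jeqM hM hM.
have cN := commr_refl N.
move: (congr1 (phi cN) (@idPow _ PV)); push cN => E.
have hMN : jeq (M * M) (N * N) by rewrite /jeq /M E; apply: JMr.
exact: (jeq_J (jeq_trans (jeq_sym hMN) (jeq_sym hMM)) hpp).
Qed.

Lemma Tri x : jacobson (x * x * x - x).
Proof.
have c := commr_refl x.
have [z1 z2 z3] := @idZ _ PV.
move: (congr1 (phi c) z1) (congr1 (phi c) z2) (congr1 (phi c) z3); push c => {}z1 {}z2 {}z3.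
rewrite z3; apply: JB; first exact: A2.
apply: Hn.
- by rewrite z1; apply: JMr; exact: Fy.
- by rewrite z2; apply: JMr; exact: J6.
Qed.

Lemma part32 : semi_tripotent R.
Proof.
move=> a.
have c := commr_refl a.
have [q1 q2 q3 q4 [q5 q6 _]] := @idP _ PV.
move: (congr1 (phi c) q1) (congr1 (phi c) q2) (congr1 (phi c) q3) (congr1 (phi c) q4) (congr1 (phi c) q5) (congr1 (phi c) q6).
push c => {}q1 {}q2 {}q3 {}q4 {}q5 {}q6.
have y3 : jacobson (3%:R * (a * a - a)).
  have yy : jacobson ((3%:R * (a * a - a)) * (3%:R * (a * a - a))).
    by rewrite q6; apply: JD; apply: JMr; [exact: Tri | exact: J6].
  set y := 3%:R * (a * a - a) in yy *.
  have -> : y = y * (y * y) - (y * y * y - y) by rewrite mulrA subKr.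
  by apply: JB; [apply: JMl | exact: Tri].
pose b1 := - a - 4%:R * a * a. pose b2 := 4%:R * a - 4%:R * a * a.
have hT := Tri a.
have hb1 : jacobson (b1 * b1 - b1).
  rewrite /b1 q1; apply: JD; [apply: JD|].
  - by apply: JMr.
  - by apply: JMr; exact: J6.
  - exact: y3.
have hb2 : jacobson (b2 * b2 - b2).
  rewrite /b2 q2; apply: JD.
  - by apply: JMr.
  - by apply: JMr; exact: J6.
have h12 : jacobson (b1 * b2).
  rewrite /b1 /b2 q3; apply: JD.
  - by apply: JMr.
  - by apply: JMr; exact: J6.
have h21 : jacobson (b2 * b1).
  rewrite /b1 /b2 q4; apply: JD.
  - by apply: JMr.
  - by apply: JMr; exact: J6.
have [e [he heb]] := lift hb1.
have [f [hf hfb]] := lift hb2.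
have ef : jacobson (e * f) by apply: (jeq_J (jeqM heb hfb)).
have fe : jacobson (f * e) by apply: (jeq_J (jeqM hfb heb)).
pose u := 1 - f * e.
have hu : u \is a GRing.unit by exact: J_unit.
pose ft := u^-1 * f * u.
have ftft : ft * ft = ft by rewrite /ft -!mulrA (mulVKr hu) (mulrA f f) hf.
have fte : ft * e = 0.
  by rewrite /ft -!mulrA /u mulrBl mul1r -mulrA he mulrBr (mulrA f f) hf subrr !mulr0.
have hft : jeq ft f.
  rewrite /jeq.
  have -> : ft - f = u^-1 * ((f * e) * (f - 1)).
    rewrite /ft -{2}(mulKr hu f) -mulrA -mulrBr; congr (_ * _).
    rewrite /u mulrBr mulr1 mulrBl mul1r (mulrA f f) hf [in RHS]mulrBr [in RHS]mulr1.
    by rewrite opprB addrC addrA subrK.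
  by apply: JMl; apply: JMr.
pose e' := e * (1 - ft).
have ftomr : (1 - ft) * e = e by rewrite mulrBl mul1r fte subr0.
have e'e' : e' * e' = e' by rewrite /e' -mulrA (mulrA (1 - ft)) ftomr mulrA he.
have e'ft : e' * ft = 0 by rewrite /e' -mulrA mulrBl mul1r ftft subrr mulr0.
have fte' : ft * e' = 0 by rewrite /e' mulrA fte mul0r.
have he' : jeq e' e.
  rewrite /jeq /e' mulrBr mulr1 addrAC subrr add0r; apply: JN.
  exact: (jeq_J (jeqMl e hft)).
have cc : GRing.comm e' ft by rewrite /GRing.comm e'ft fte'.
pose t := e' - ft.
have ht : tripotent t.
  move: (congr1 (phi cc) (@idT _ PG PV)); push cc.
  by rewrite e'e' ftft e'ft !subrr !mul0r mulr0 !mul0r !subr0 addr0.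
exists t, (a - t); split=> //; split; last by rewrite addrC subrK.
apply: jeq_sym.
apply: (jeq_trans (jeqB he' hft)).
apply: (jeq_trans (jeqB heb hfb)).
rewrite /jeq /b1 /b2 q5 addrAC subrr add0r; apply: JN; apply: JMr; exact: J6.
Qed.


End Part1.

Theorem theorem4p13 (R : unitRingType) :
  (DT_ring R <-> semi_tripotent R) /\
  (semi_tripotent R <->
     (forall a : R, exists e v j : R,
        e * e = e /\ v * v = 1 /\ e * v = v * e /\ jacobson j /\ a = e + v + j)).
Proof.
split; first exact: part12.
split; [exact: part23 | exact: part32].
Qed.
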